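(* Let $G$ be a graph, $k,\ell\ge1$, $S$ an independent set of size $k$, and $J_0=S,J_1,\dots,J_\ell$ independent sets of $G$. Define $\mathcal{C}_0=\{\{(S,k)\}\}$ and, for $i\in\{1,\dots,\ell\}$, let $\mathcal{C}_i$ contain, for every $C\in\mathcal{C}_{i-1}$ and every constraint $(X,b)\in C$, the constraint set $C'$ consisting of: $(N(X)\cap J_i,1)$; $(X\cap J_i,b-1)$ if $b\ge2$ (nothing if $b=1$); and $(X'\cap J_i,b')$ for every other constraint $(X',b')\in C$. Let $i\in\{0,\dots,\ell\}$ and let $Z\subseteq J_i$ be an independent set of size $k$. If there is a sequence $S=I'_0,I'_1,\dots,I'_i=Z$ of independent sets of size $k$ such that $I'_p\subseteq J_p$ for every $p\in\{0,\dots,i\}$ and each $I'_{p+1}=(I'_p\setminus\{u\})\cup\{v\}$ for some $u\in I'_p$, $v\notin I'_p$ with $\{u,v\}\in E(G)$, then $Z$ satisfies at least one constraint set in $\mathcal{C}_i$.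
   Context: A constraint is a pair $(X,b)$ with $X\subseteq V(G)$ and $b$ a positive integer. A set $Z\subseteq V(G)$ satisfies $(X,b)$ if $|Z\cap X|=b$, and satisfies a constraint set $C$ if it satisfies every constraint in $C$. For $X\subseteq V(G)$, $N(X)=\{v\notin X: v\text{ adjacent to some }u\in X\}$. *)

(* Defs.v *)
From mathcomp Require Import all_boot.
Set Implicit Arguments. Unset Strict Implicit. Unset Printing Implicit Defensive.

Definition simple_graph (T : finType) (e : rel T) : Prop :=
  symmetric e /\ irreflexive e.

Definition independent (T : finType) (e : rel T) (I : {set T}) : bool :=
  [forall u in I, forall v in I, ~~ e u v].

Definition nbhd (T : finType) (e : rel T) (X : {set T}) : {set T} :=
  [set v | (v \notin X) && [exists u in X, e u v]].

(* a constraint (X, b); constraint sets are represented as lists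
   (only membership matters for satisfaction) *)
Definition constraint (T : finType) := ({set T} * nat)%type.

Definition sat_constraint (T : finType) (Z : {set T}) (c : constraint T) : bool :=
  #|Z :&: c.1| == c.2.

Definition sat_cset (T : finType) (Z : {set T}) (C : seq (constraint T)) : bool :=
  all (sat_constraint Z) C.

Definition step_cset (T : finType) (e : rel T) (J : {set T})
  (C : seq (constraint T)) (c : constraint T) : seq (constraint T) :=
  (nbhd e c.1 :&: J, 1)
  :: (if 2 <= c.2 then [:: (c.1 :&: J, c.2.-1)] else [::])
  ++ [seq (c'.1 :&: J, c'.2) | c' <- C & c' != c].

Fixpoint Cfam (T : finType) (e : rel T) (S : {set T}) (k : nat)
  (J : nat -> {set T}) (i : nat) : seq (seq (constraint T)) :=
  match i with
  | 0 => [:: [:: (S, k)]]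
  | i'.+1 => flatten [seq [seq step_cset e (J i'.+1) C c | c <- C]
                     | C <- Cfam e S k J i']
  end.

(* Main.v *)
Require Import Defs.
From mathcomp Require Import all_boot.
Set Implicit Arguments. Unset Strict Implicit. Unset Printing Implicit Defensive.

Lemma indepP (T : finType) (e : rel T) (A : {set T}) x y :
  independent e A -> x \in A -> y \in A -> ~~ e x y.
Proof. move=> /forall_inP H xA yA; exact: (forall_inP (H x xA) y yA). Qed.

Lemma Cfam_step (T : finType) (e : rel T) S k J p C c :
  C \in Cfam e S k J p -> c \in C -> step_cset e (J p.+1) C c \in Cfam e S k J p.+1.
Proof.
move=> HC Hc /=; apply/flattenP.
exists [seq step_cset e (J p.+1) C c0 | c0 <- C]; first by apply: (map_f _ HC).
exact: map_f.
Qed.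

Lemma step_ok (T : finType) (e : rel T) (Jp Jq I : {set T}) (u v : T) (C : seq (constraint T)) :
 independent e Jp -> I \subset Jp -> u \in I -> v \notin I -> e u v ->
 (I :\ u :|: [set v]) \subset Jq ->
 sat_cset I C -> (forall c, c \in C -> c.1 \subset Jp) ->
 (forall c1 c2 w, c1 \in C -> c2 \in C -> w \in c1.1 -> w \in c2.1 -> c1 = c2) ->
 (forall w, w \in I -> exists2 c, c \in C & w \in c.1) ->
 exists2 c, c \in C & 
 [/\ sat_cset (I :\ u :|: [set v]) (step_cset e Jq C c),
   (forall d, d \in step_cset e Jq C c -> d.1 \subset Jq),
   (forall d1 d2 w, d1 \in step_cset e Jq C c -> d2 \in step_cset e Jq C c ->
       w \in d1.1 -> w \in d2.1 -> d1 = d2) &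
   (forall w, w \in (I :\ u :|: [set v]) -> exists2 d, d \in step_cset e Jq C c & w \in d.1)].
Proof.
move=> iJ IJ uI vI euv I2J satC CJ Cdis Ccov.
have [[X b] cC uX] := Ccov u uI.
exists (X, b) => //.
have satc : #|I :&: X| = b by move/allP: satC => /(_ _ cC) /eqP.
have XJ : X \subset Jp := CJ _ cC.
have uJ : u \in Jp := subsetP IJ u uI.
have vnot : forall c', c' \in C -> v \notin c'.1.
  move=> c' c'C; apply/negP => vc'.
  by have := indepP iJ uJ (subsetP (CJ _ c'C) v vc'); rewrite euv.
have vX : v \notin X := vnot _ cC.
have vN : v \in nbhd e X.
  by rewrite /nbhd inE vX /=; apply/existsP; exists u; rewrite uX euv.
have NX : forall w, w \in nbhd e X -> w \notin X by move=> w; rewrite /nbhd inE => /andP [].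
have INX : forall w, w \in Jp -> w \notin nbhd e X.
  move=> w wJ; rewrite /nbhd inE; apply/negP => /andP [_ /existsP [x /andP [xX exw]]].
  by have := indepP iJ (subsetP XJ x xX) wJ; rewrite exw.
have uother : forall c', c' \in C -> c' != (X,b) -> u \notin c'.1.
  move=> c' c'C ne; apply/negP => uc'.
  by have E := Cdis _ _ u c'C cC uc' uX; rewrite E eqxx in ne.
have I2J' : forall w, w \in I -> w != u -> w \in Jq.
  by move=> w wI wu; apply: (subsetP I2J); rewrite !inE wu wI.
have vJq : v \in Jq by apply: (subsetP I2J); rewrite !inE eqxx orbT.
have kinds : forall d, d \in step_cset e Jq C (X,b) ->
  [\/ d = (nbhd e X :&: Jq, 1), (2 <= b /\ d = (X :&: Jq, b.-1)) |
      exists2 c', c' \in C & (c' != (X,b) /\ d = (c'.1 :&: Jq, c'.2))].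
  move=> d; rewrite /step_cset in_cons mem_cat => /orP [/eqP ->|/orP [H|/mapP [c' Hc' ->]]].
  - by constructor 1.
  - by move: H => /=; case: ifP => // b2; rewrite inE => /eqP ->; constructor 2.
  - by constructor 3; move: Hc'; rewrite mem_filter => /andP [ne c'C]; exists c'.
split.
- apply/allP => d /kinds [->|[b2 ->]|[c' c'C [ne ->]]]; rewrite /sat_constraint /=; apply/eqP.
  + have -> : (I :\ u :|: [set v]) :&: (nbhd e X :&: Jq) = [set v].
      apply/setP => w; rewrite !in_setI !in_setU !in_setD1 !in_set1.
      case: (eqVneq w v) => [->|wv]; first by rewrite orbT vN vJq.
      rewrite orbF; case: (eqVneq w u) => [->|wu] //=.
      case wI: (w \in I) => //=.
      by rewrite (negbTE (INX w (subsetP IJ w wI))).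
    by rewrite cards1.
  + have -> : (I :\ u :|: [set v]) :&: (X :&: Jq) = (I :&: X) :\ u.
      apply/setP => w; rewrite !in_setI !in_setU !in_setD1 !in_set1 !in_setI.
      case: (eqVneq w v) => [->|wv]; first by rewrite (negbTE vX) /= !andbF.
      rewrite orbF; case: (eqVneq w u) => [->|wu] //=.
      case wI: (w \in I) => //=.
      by rewrite I2J' // andbT.
    have := cardsD1 u (I :&: X); rewrite in_setI uI uX satc => ->.
    by rewrite add1n.
  + have -> : (I :\ u :|: [set v]) :&: (c'.1 :&: Jq) = I :&: c'.1.
      apply/setP => w; rewrite !in_setI !in_setU !in_setD1 !in_set1.
      case: (eqVneq w v) => [->|wv]; first by rewrite (negbTE (vnot _ c'C)) (negbTE vI) /= !andbF.
      rewrite orbF; case: (eqVneq w u) => [->|wu] /=.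
        by rewrite (negbTE (uother _ c'C ne)) andbF.
      case wI: (w \in I) => //=.
      by rewrite I2J' // andbT.
    by apply/eqP; move/allP: satC => /(_ _ c'C).
- by move=> d /kinds [->|[_ ->]|[c' _ [_ ->]]]; exact: subsetIr.
- move=> d1 d2 w /kinds K1 /kinds K2.
  case: K1 => [->|[_ ->]|[c1 c1C [ne1 ->]]]; case: K2 => [->|[_ ->]|[c2 c2C [ne2 ->]]] //=;
    rewrite !in_setI => /andP [h1 _] /andP [h2 _].
  + by rewrite (negbTE (NX _ h1)) in h2.
  + by rewrite (negbTE (INX _ (subsetP (CJ _ c2C) w h2))) in h1.
  + by rewrite (negbTE (NX _ h2)) in h1.
  + by have E := Cdis _ _ w cC c2C h1 h2; rewrite -E eqxx in ne2.
  + by rewrite (negbTE (INX _ (subsetP (CJ _ c1C) w h1))) in h2.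
  + by have E := Cdis _ _ w c1C cC h1 h2; rewrite E eqxx in ne1.
  + by rewrite (Cdis _ _ w c1C c2C h1 h2).
- move=> w; rewrite in_setU in_setD1 in_set1 => /orP [/andP [wu wI]| /eqP ->].
  + have [c'' c''C wc''] := Ccov w wI.
    case: (eqVneq c'' (X,b)) => [E|ne].
    * rewrite E /= in wc''.
      have b2 : 2 <= b.
        rewrite -satc; have : [set u; w] \subset I :&: X.
          by apply/subsetP => x; rewrite !inE => /orP [] /eqP ->; rewrite ?uI ?uX ?wI ?wc''.
        by move/subset_leq_card; rewrite cards2 eq_sym wu.
      exists (X :&: Jq, b.-1).
        by rewrite /step_cset in_cons mem_cat b2 /= in_cons eqxx /= orbT.
      by rewrite /= in_setI wc'' I2J'.
    * exists (c''.1 :&: Jq, c''.2).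
        rewrite /step_cset in_cons mem_cat; apply/orP; right; apply/orP; right.
        by apply: (map_f (fun c' => (c'.1 :&: Jq, c'.2))); rewrite mem_filter ne c''C.
      by rewrite /= in_setI wc'' I2J'.
  + exists (nbhd e X :&: Jq, 1); first by rewrite /step_cset in_cons eqxx.
    by rewrite /= in_setI vN vJq.
Qed.

Theorem lemma3p6 (T : finType) (e : rel T) (k l : nat) (S : {set T})
  (J : nat -> {set T}) (i : nat) (Z : {set T}) (I' : nat -> {set T}) :
  simple_graph e ->
  1 <= k -> 1 <= l ->
  independent e S -> #|S| = k ->
  J 0 = S ->
  (forall p, p <= l -> independent e (J p)) ->
  i <= l ->
  Z \subset J i -> independent e Z -> #|Z| = k ->
  I' 0 = S -> I' i = Z ->
  (forall p, p <= i -> [/\ independent e (I' p), #|I' p| = k & I' p \subset J p]) ->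
  (forall p, p < i -> exists u v, [/\ u \in I' p, v \notin I' p, e u v &
                                  I' p.+1 = (I' p :\ u) :|: [set v]]) ->
  exists2 C, C \in Cfam e S k J i & sat_cset Z C.
Proof.
move=> _ _ _ _ cS J0 indJ il _ _ _ I0 Ii HI Hstep.
suff: forall p, p <= i -> exists C, [/\ C \in Cfam e S k J p, sat_cset (I' p) C,
   (forall c, c \in C -> c.1 \subset J p),
   (forall c1 c2 w, c1 \in C -> c2 \in C -> w \in c1.1 -> w \in c2.1 -> c1 = c2) &
   (forall w, w \in I' p -> exists2 c, c \in C & w \in c.1)].
  by move=> /(_ i (leqnn i)) [C [CF sC _ _ _]]; exists C => //; rewrite -Ii.
elim=> [_|p IH pi].
  exists [:: (S, k)]; split.
  - by rewrite /= inE.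
  - by rewrite /sat_cset /= andbT /sat_constraint /= I0 setIid cS.
  - by move=> c; rewrite inE => /eqP -> /=; rewrite J0.
  - by move=> c1 c2 w; rewrite !inE => /eqP -> /eqP ->.
  - by move=> w wI; exists (S, k); rewrite ?inE // -I0.
have [C [CF sC CJ Cd Cc]] := IH (ltnW pi).
have [u [v [uI vI euv E]]] := Hstep p pi.
have [_ _ IJ] := HI p (ltnW pi).
have [_ _ IJ2] := HI p.+1 pi.
rewrite E in IJ2 *.
have [c cC [s1 s2 s3 s4]] := step_ok (indJ p (leq_trans (ltnW pi) il)) IJ uI vI euv IJ2 sC CJ Cd Cc.
exists (step_cset e (J p.+1) C c); split => //.
exact: Cfam_step.
Qed.
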